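(* Let $\delta\in(0,1)$ and let $I=\{a_1,\dots,a_N\}$ be a set of $N$ real values presented in a uniformly random order. Run the following online procedure: set $A=\emptyset$, $u=N\delta/2$, $M=-\infty$, $L=4\ln(2/\delta)$; for $i=1,\dots,N$, when the $i$-th value $x_i$ arrives, if $x_i>M$ then set $M\leftarrow x_i$ and, if moreover $i\ge u$ and $|A|<L$, add $x_i$ to $A$. At the end output $A$ and $A^*=\max_{x\in A}x$. Then with probability at least $1-\delta$, $A^*=\max(a_1,\dots,a_N)$. *)

(* Defs.v *)
From mathcomp Require Import all_boot all_order all_algebra all_fingroup.
From mathcomp Require Import all_classical all_reals all_analysis.
Set Implicit Arguments. Unset Strict Implicit. Unset Printing Implicit Defensive.
Import Order.TTheory GRing.Theory Num.Theory.
Local Open Scope ring_scope.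

Section Proc.
Variable R : realType.
Variable delta : R.

Definition thr_u (N : nat) : R := N%:R * delta / 2.
Definition cap_L : R := 4 * ln (2 / delta).

Definition step (N i : nat) (x : R) (st : seq R * \bar R) : seq R * \bar R :=
  let: (A, M) := st in
  if (M < x%:E)%E then
    (if (thr_u N <= i%:R) && ((size A)%:R < cap_L) then rcons A x else A, x%:E)
  else (A, M).

(* i is the (1-based) index of the head of xs *)
Fixpoint run_aux (N i : nat) (xs : seq R) (st : seq R * \bar R) :=
  match xs with
  | [::] => st
  | x :: xs' => run_aux N i.+1 xs' (step N i x st)
  end.

Definition run_A (xs : seq R) : seq R := (run_aux (size xs) 1 xs ([::], -oo%E)).1.

Definition Astar (A : seq R) : \bar R := (\big[maxe/-oo]_(x <- A) x%:E)%E.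
End Proc.

Definition arrivals (R : realType) (N : nat) (a : 'I_N -> R) (s : 'S_N) : seq R :=
  [seq a (s i) | i <- enum 'I_N].

(* Main.v *)
Require Import Defs.
From mathcomp Require Import all_boot all_order all_algebra all_fingroup.
From mathcomp Require Import all_classical all_reals all_analysis.
From mathcomp Require Import lra ring.
Import Order.TTheory GRing.Theory Num.Theory.
Local Open Scope ring_scope.

Module Helpers.
Set Implicit Arguments. Unset Strict Implicit. Unset Printing Implicit Defensive.

Section Aux.
Variable R : realType.
Variable delta : R.
Variable N : nat.

Definition mx (t : seq R) : \bar R := (\big[maxe/-oo]_(x <- t) x%:E)%E.

Fixpoint cnt (i : nat) (M : \bar R) (xs : seq R) : nat :=
  match xs with
  | [::] => 0%N
  | x :: xs' => if (M < x%:E)%E then ((((thr_u delta N <= i%:R)%R : bool) : nat) + cnt i.+1 x%:E xs')%N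
                else cnt i.+1 M xs'
  end.

Fixpoint Wt (z : nat -> R) (i : nat) (M : \bar R) (xs : seq R) : R :=
  match xs with
  | [::] => 1
  | x :: xs' => if (M < x%:E)%E then z i * Wt z i.+1 x%:E xs' else Wt z i.+1 M xs'
  end.

Lemma mx_lt t y : (mx t < y%:E)%E = all (fun x => x < y) t.
Proof.
elim: t => [|x t IH]; first by rewrite /mx big_nil ltNyr.
by rewrite /mx big_cons gt_max lte_fin -/(mx t) IH.
Qed.

Lemma mx_rcons t x : mx (rcons t x) = maxe (mx t) x%:E.
Proof.
elim: t => [|y t IH]; first by rewrite /mx /= !big_cons !big_nil maxC.
by rewrite /= /mx !big_cons -/(mx t) -/(mx (rcons t x)) IH maxA.
Qed.

Lemma Wt_rcons z i M t x :
  Wt z i M (rcons t x) =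
  Wt z i M t * (if (maxe M (mx t) < x%:E)%E then z (i + size t)%N else 1).
Proof.
elim: t i M => [|y t IH] i M /=.
  rewrite /mx big_nil addn0 mul1r.
  have -> : maxe M -oo%E = M by apply/max_idPl; rewrite leNye.
  by case: ifP; rewrite ?mulr1.
rewrite /mx big_cons -/(mx t) addnS -addSn.
case: ifP => My; rewrite IH.
  have -> : maxe M (maxe y%:E (mx t)) = maxe y%:E (mx t).
    by apply/max_idPr; rewrite le_max (ltW My).
  by rewrite mulrA.
have -> : maxe M (maxe y%:E (mx t)) = maxe M (mx t).
  rewrite maxA; congr maxe; apply/max_idPl; by rewrite leNgt My.
by [].
Qed.

Lemma Wt_pow y i M xs :
  Wt (fun k => if thr_u delta N <= k%:R then y else 1) i M xs = y ^+ cnt i M xs.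
Proof.
elim: xs i M => [|x xs IH] i M //=.
case: ifP => // _; case: ifP => _; rewrite IH ?mul1r //.
by rewrite add1n exprS.
Qed.

Lemma cnt0 i M xs : thr_u delta N <= i%:R -> cnt i M xs = 0%N ->
  all (fun y => (y%:E <= M)%E) xs.
Proof.
elim: xs i M => [|x xs IH] i M //= Hi.
case: ifP => Mx.
  by rewrite Hi.
move=> H; rewrite leNgt Mx /=; apply: (IH i.+1) => //.
by apply: (le_trans Hi); rewrite ler_nat.
Qed.

Lemma Astar_rcons (A : seq R) x : Astar (rcons A x) = maxe (Astar A) x%:E.
Proof. exact: mx_rcons. Qed.

Lemma run_ok xs i A M : (Astar A <= M)%E ->
  ((0 < cnt i M xs)%N && (((size A + cnt i M xs).-1)%:R < cap_L delta))
  || [&& cnt i M xs == 0%N, all (fun y => (y%:E <= M)%E) xs & Astar A == M] ->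
  Astar (run_aux delta N i xs (A, M)).1 = maxe M (mx xs).
Proof.
elim: xs i A M => [|x xs IH] i A M /= HA.
  move=> /eqP ->.
  by rewrite /mx big_nil; apply/esym/max_idPl; rewrite leNye.
rewrite /mx big_cons -/(mx xs).
case: ifP => Mx.
  have -> : maxe M (maxe x%:E (mx xs)) = maxe x%:E (mx xs).
    by apply/max_idPr; rewrite le_max (ltW Mx).
  case Hth: (thr_u delta N <= i%:R) => /=.
    rewrite add1n orbF /= => H.
    have HL : (size A)%:R < cap_L delta.
      by apply: le_lt_trans H; rewrite ler_nat addnS /= leq_addr.
    rewrite HL /=.
    have HA1 : Astar (rcons A x) = x%:E.
      by rewrite Astar_rcons; apply/max_idPr; rewrite ltW // (le_lt_trans HA Mx).
    apply: IH; first by rewrite HA1.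
    case: (posnP (cnt i.+1 x%:E xs)) => Hc.
      apply/orP; right; rewrite ?Hc ?eqxx HA1 eqxx andbT /=.
      by apply: (@cnt0 i.+1 x%:E xs) => //; apply: (le_trans Hth); rewrite ler_nat.
    apply/orP; left; rewrite ?Hc /= size_rcons addSn /=; by move: H; rewrite addnS.
  rewrite add0n => /orP[H|]; last first.
    by move=> /and3P[_ /andP[]]; rewrite leNgt Mx.
  apply: IH; first by rewrite (le_trans HA) // ltW.
  by rewrite H.
have -> : maxe M (maxe x%:E (mx xs)) = maxe M (mx xs).
  rewrite maxA; congr maxe; apply/max_idPl; by rewrite leNgt Mx.
move=> H; apply: IH => //.
case/orP: H => [->//|/and3P[-> /andP[_ ->] ->]]; by rewrite orbT.
Qed.

End Aux.


Section P2.
Variable R : realType.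

Lemma sum_rev (G : seq R -> R) (s : seq R) :
  \sum_(t <- permutations s) G (rev t) = \sum_(t <- permutations s) G t.
Proof.
rewrite -(big_map rev xpredT G); apply: perm_big.
apply: uniq_perm; rewrite ?permutations_uniq //; first by rewrite map_inj_uniq ?permutations_uniq //; exact: (can_inj (@revK _)).
move=> t; rewrite -{1}(revK t) (mem_map (can_inj (@revK _))) !mem_permutations.
by rewrite perm_rev.
Qed.

Lemma ex_max (s : seq R) : s != [::] -> exists2 m, m \in s & all (fun y => y <= m) s.
Proof.
elim: s => [//|x s IH] _.
case: (eqVneq s [::]) => [->|/IH [m ms Hm]].
  by exists x; rewrite ?mem_head //= lexx.
case: (leP x m) => Hxm.
  by exists m; rewrite ?inE ?ms ?orbT //= Hxm Hm.
exists x; rewrite ?mem_head //= lexx /=.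
by apply/allP => y /(allP Hm) Hy; rewrite (le_trans Hy) // ltW.
Qed.

Lemma sum_cond (s : seq R) (c : R) n : uniq s -> size s = n.+1 ->
  \sum_(x <- s) (if (maxe -oo%E (mx (rem x s)) < x%:E)%E then c else 1) = c + n%:R.
Proof.
move=> Us Hs.
have [m ms Hm] : exists2 m, m \in s & all (fun y => y <= m) s.
  by apply: ex_max; case: s Hs {Us}.
rewrite (eq_big_seq (fun x => if x == m then c else 1)); last first.
  move=> x xs.
  have -> : maxe -oo%E (mx (rem x s)) = mx (rem x s) by apply/max_idPr; rewrite leNye.
  rewrite mx_lt; suff -> : all (fun y => y < x) (rem x s) = (x == m) by [].
  case: (eqVneq x m) => [->|xm].
    apply/allP => y; rewrite (mem_rem_uniq _ Us) inE => /andP[ym ys].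
    by rewrite lt_neqAle ym (allP Hm).
  apply/negP => /allP /(_ m).
  rewrite (mem_rem_uniq _ Us) inE eq_sym xm ms => /(_ isT).
  by rewrite ltNge (allP Hm).
rewrite (bigD1_seq m) //= eqxx; congr (_ + _).
rewrite (eq_bigr (fun _ => 1)); last by move=> i /negbTE ->.
rewrite big_const_seq.
have -> : count (fun i => i != m) s = n.
  have := count_predC (pred1 m) s.
  rewrite Hs (count_uniq_mem _ Us) ms => /eqP; rewrite add1n eqSS => /eqP <-.
  by apply: eq_count => y.
by elim: n {Hs} => [|n IH] //=; rewrite IH -natr1 addrC.
Qed.

Lemma sumW z n (s : seq R) : uniq s -> size s = n ->
  \sum_(t <- permutations s) Wt z 1 -oo%E t = \prod_(i < n) (z i.+1 + i%:R).
Proof.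
elim: n s => [|n IH] s Us Hs.
  by case: s Us Hs => // _ _; rewrite /permutations /= big_cons big_nil big_ord0 addr0.
rewrite -sum_rev.
rewrite (perm_big _ (permutationsE _)); last by rewrite Hs.
rewrite big_allpairs_dep undup_id //.
rewrite (eq_big_seq (fun x => \prod_(i < n) (z i.+1 + i%:R) *
   (if (maxe -oo%E (mx (rem x s)) < x%:E)%E then z n.+1 else 1))); last first.
  move=> x xs.
  have Hr : size (rem x s) = n by rewrite size_rem // Hs.
  rewrite (eq_big_seq (fun t => Wt z 1 -oo%E (rev t) *
     (if (maxe -oo%E (mx (rem x s)) < x%:E)%E then z n.+1 else 1))); last first.
    move=> t; rewrite mem_permutations => Ht.
    rewrite rev_cons Wt_rcons size_rev (perm_size Ht) Hr add1n.
    suff -> : mx (rev t) = mx (rem x s) by [].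
    by apply: perm_big; rewrite perm_rev.
  by rewrite -big_distrl /= sum_rev IH // rem_uniq.
by rewrite -big_distrr /= (sum_cond (n:=n) _ Us Hs) big_ord_recr.
Qed.

End P2.


Section P3.
Variable R : realType.

Lemma prod_id (u c : R) n : (forall i, (i < n)%N -> ~~ (u <= i.+1%:R)) ->
  \prod_(i < n) ((if u <= i.+1%:R then c else 1) + i%:R) = n`!%:R.
Proof.
elim: n => [|n IH] H; first by rewrite big_ord0.
rewrite big_ord_recr /= IH; last by move=> i Hi; apply: H; apply: ltnW.
by rewrite (negbTE (H n (ltnSn n))) factS natrM mulrC -natr1 addrC.
Qed.

Lemma prod0 (u : R) n : 0 <= u ->
  \prod_(i < n) ((if u <= i.+1%:R then 0 else 1) + i%:R) * n%:R <= n`!%:R * u.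
Proof.
move=> u0; elim: n => [|n IH]; first by rewrite big_ord0 mulr0 mul1r.
case: (boolP (u <= n.+1%:R)) => Hu.
  rewrite big_ord_recr /= Hu add0r factS natrM.
  set P := \prod_(i < n) _ in IH *.
  set F := (n`!)%:R in IH *.
  have Hn1 : (n.+1)%:R = (n%:R + 1 : R) by rewrite -natr1.
  rewrite Hn1.
  have n0 : 0 <= n%:R :> R by [].
  nra.
rewrite prod_id; last first.
  move=> i Hi; apply: contra Hu => Hi'; apply: (le_trans Hi').
  by rewrite ler_nat.
rewrite ler_pM2l ?ltW //; first by rewrite ltNge.
Qed.

Lemma prod2 (u q : R) n : 0 <= q -> q <= 2 ->
  \prod_(i < n) ((if u <= i.+1%:R then q else 1) + i%:R) * Num.min (Num.max u 1) n.+1%:R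
  <= n`!%:R * n.+1%:R.
Proof.
move=> q0 q2; elim: n => [|n IH].
  by rewrite big_ord0 mul1r mul1r ge_min lexx orbT.
case: (boolP (u <= n.+1%:R)) => Hu.
  have w1 : Num.max u 1 <= n.+1%:R by rewrite ge_max Hu /= ler1n.
  have w2 : Num.max u 1 <= n.+2%:R by rewrite (le_trans w1) // ler_nat.
  move: IH; rewrite big_ord_recr /= Hu.
  rewrite (min_idPl w1) (min_idPl w2) factS natrM.
  set P := \prod_(i < n) _; set w := Num.max u 1; set F := (n`!)%:R.
  move=> IH.
  have F0 : 0 <= F by [].
  have Hn : (n.+2)%:R = (n%:R + 2 : R) by rewrite -[n.+2]addn2 natrD.
  have Hn1 : (n.+1)%:R = (n%:R + 1 : R) by rewrite -natr1.
  rewrite Hn Hn1; rewrite Hn1 in IH.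
  have n0 : 0 <= n%:R :> R by [].
  have h1 : P * w * (q + n%:R) <= F * (n%:R + 1) * (q + n%:R).
    by rewrite ler_wpM2r // addr_ge0.
  have h2 : F * (n%:R + 1) * (q + n%:R) <= F * (n%:R + 1) * (n%:R + 2).
    by rewrite ler_wpM2l ?mulr_ge0 ?addr_ge0 //; lra.
  rewrite (mulrC _ F) -mulrA (mulrC (q + _)) mulrA.
  exact: le_trans h1 h2.
rewrite prod_id; last first.
  move=> i Hi; apply: contra Hu => Hi'; apply: (le_trans Hi').
  by rewrite ler_nat.
rewrite ler_pM2l; last by rewrite ltr0n fact_gt0.
by rewrite ge_min lexx orbT.
Qed.

End P3.


Section P4.
Variable R : realType.

Lemma count_perm N (a : 'I_N -> R) (P : pred (seq R)) : injective a ->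
  #|[set s : 'S_N | P (arrivals a s)]| = count P (permutations (map a (enum 'I_N))).
Proof.
move=> ia.
rewrite cardsE cardE /enum_mem size_filter.
set E := Finite.enum _.
have -> : count (mem [pred s : 'S_N | P (arrivals a s)]) E = count P (map (arrivals a) E).
  by rewrite count_map.
suff HP : perm_eq (map (arrivals a) E) (permutations (map a (enum 'I_N))) by rewrite (seq.permP HP).
have UE : uniq (map (arrivals a) E).
  rewrite map_inj_uniq.
    by rewrite /E -enumT enum_uniq.
  move=> s1 s2 /eq_in_map H; apply/permP => i.
  by apply: ia; apply: H; rewrite mem_enum.
have sub : {subset map (arrivals a) E <= permutations (map a (enum 'I_N))}.
  move=> t /mapP [s _ ->]; rewrite mem_permutations /arrivals.
  have -> : [seq a (s i) | i <- enum 'I_N] = map a (map s (enum 'I_N)) by rewrite map_comp.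
  apply: perm_map; apply: uniq_perm; rewrite ?enum_uniq //.
    by rewrite map_inj_uniq ?enum_uniq //; apply: perm_inj.
  move=> i; rewrite mem_enum; apply/mapP; exists (s^-1 i)%g; rewrite ?mem_enum //.
  by rewrite permKV.
have Hs : (size (permutations (map a (enum 'I_N))) <= size (map (arrivals a) E))%N.
  rewrite size_permutations ?size_map ?size_enum_ord.
    rewrite /E; move: (card_Sn N); rewrite cardT enumT => ->; by rewrite -enumT size_enum_ord.
  by rewrite map_inj_uniq ?enum_uniq.
have [Hsz Heq] := uniq_min_size UE sub Hs.
apply: uniq_perm => //; exact: permutations_uniq.
Qed.
End P4.

End Helpers.
Import Helpers.

Lemma count_sum (R : realType) (X : Type) (P : pred X) (s : seq X) :
  (count P s)%:R = \sum_(t <- s) (P t)%:R :> R.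
Proof.
elim: s => [|x s IH]; first by rewrite big_nil.
by rewrite big_cons /= natrD IH.
Qed.

Theorem proposition1 (R : realType) (delta : R) (N : nat) (a : 'I_N -> R) :
  0 < delta < 1 -> (0 < N)%N -> injective a ->
  1 - delta <=
    #|[set s : 'S_N |
        Astar (run_A delta (arrivals a s)) == (\big[maxe/-oo]_(i < N) (a i)%:E)%E]|%:R
    / #|[set: 'S_N]|%:R.
Proof.
move=> /andP[d0 d1] N0 ia.
set MX := (\big[maxe/-oo]_(i < N) (a i)%:E)%E.
rewrite (count_perm (fun t => Astar (run_A delta t) == MX) ia) cardsT card_Sn.
set r := map a (enum 'I_N).
have Ur : uniq r by rewrite map_inj_uniq ?enum_uniq.
have Sr : size r = N by rewrite size_map size_enum_ord.
set T := permutations r.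
set c := fun t => cnt delta N 1 -oo%E t.
set L := cap_L delta.
set u := thr_u delta N.
pose good t := (0 < c t)%N && ((c t).-1%:R < L).
pose succ := (fun t => Astar (run_A delta t) == MX).
have Hmx : mx r = MX by rewrite /mx big_map big_enum.
have Hgood : forall t, t \in T -> good t -> succ t.
  move=> t; rewrite mem_permutations => Ht /andP[c0 cL].
  have St : size t = N by rewrite (perm_size Ht).
  rewrite /succ /run_A St; apply/eqP.
  rewrite run_ok; last first.
    by apply/orP; left; rewrite add0n c0.
    by rewrite /Astar big_nil.
  have -> : maxe -oo%E (mx t) = mx t by apply/max_idPr; rewrite leNye.
  by rewrite -Hmx; apply: perm_big.
have HS : (count good T <= count succ T)%N.
  have <- : count (fun t => good t && succ t) T = count good T.
    apply: eq_in_count => t tT; case: (boolP (good t)) => //= g.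
    by rewrite (Hgood t tT g).
  by apply: sub_count => t /andP[].
pose f0 t := c t == 0%N.
pose f2 t := L + 1 <= (c t)%:R.
have HC : (count (predC good) T <= count f0 T + count f2 T)%N.
  apply: (leq_trans (sub_count (a2 := predU f0 f2) _ T)).
    move=> t /=; rewrite /good /f0 /f2; case: (posnP (c t)) => [->|cp] //=.
    rewrite -leNgt => H.
    by rewrite -(prednK cp) -natr1 lerD2r.
  by rewrite -count_predUI leq_addr.
have HT : (count good T + count (predC good) T)%N = N`!.
  by rewrite count_predC size_permutations // Sr.
have u0 : 0 <= u by rewrite /u /thr_u; apply: divr_ge0 => //; apply: mulr_ge0 => //; exact: ltW.
have F0b : (count f0 T)%:R * N%:R <= N`!%:R * u.
  have -> : (count f0 T)%:R = \sum_(t <- T) Wt (fun k => if u <= k%:R then 0 else 1) 1 -oo%E t.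
    by rewrite count_sum; apply: eq_bigr => t _; rewrite Wt_pow expr0n.
  rewrite (sumW _ Ur Sr); exact: prod0.
set q := expR (2^-1 : R).
have q0 : 0 < q by apply: expR_gt0.
have q32 : 3/2 <= q by have := expR_ge1Dx (2^-1 : R); rewrite -/q; lra.
have q2 : q <= 2.
  have := expR_ge1Dx (- 2^-1 : R); rewrite expRN -/q => h.
  have qq : q * q^-1 = 1 by rewrite mulfV // gt_eqF.
  nra.
set K : R := 3/2 * (2/delta)^+2.
have F2b : (count f2 T)%:R * K <= \prod_(i < N) ((if u <= i.+1%:R then q else 1) + i%:R).
  rewrite count_sum mulr_suml -(sumW (fun k => if u <= k%:R then q else 1) Ur Sr).
  apply: ler_sum => t _; rewrite Wt_pow.
  case: (boolP (f2 t)) => /= h; last by rewrite mul0r exprn_ge0 ?ltW.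
  rewrite mul1r -expRM_natl.
  have E2 : (2/delta)^+2 = expR (2%:R * ln (2/delta)).
    by rewrite expRM_natl lnK // posrE divr_gt0.
  rewrite /K E2.
  apply: (@le_trans _ _ (q * expR (2%:R * ln (2 / delta)))).
    by apply: ler_wpM2r q32; apply: ltW; apply: expR_gt0.
  rewrite /q -expRD ler_expR.
  move: h; rewrite /f2 /L /cap_L; lra.
have P2b := prod2 u N (ltW q0) q2.
set w := Num.max u 1.
have w1 : 1 <= w by rewrite le_max lexx orbT.
have wu : u <= w by rewrite le_max lexx.
have uN : u <= N.+1%:R.
  rewrite /u /thr_u ; have -> : N.+1%:R = N%:R + 1 :> R by rewrite natr1.
  have h : 0 <= N%:R * (1 - delta) :> R by apply: mulr_ge0 => //; lra.
  have : 0 <= N%:R :> R by []. move=> ?. lra.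
have wN : w <= N.+1%:R by rewrite ge_max uN ler1n.
rewrite (min_idPl wN) in P2b.
set P := \prod_(i < N) _ in F2b P2b.
set Fa := (N`!)%:R in F0b P2b *.
have Fa0 : 0 < Fa by rewrite ltr0n fact_gt0.
have N0' : 0 < N%:R :> R by rewrite ltr0n.
have hw : (N%:R + 1) * delta <= 3 * w.
  have : u = N%:R * delta / 2 by [].
  nra.
set F0 := (count f0 T)%:R in F0b.
set F2 := (count f2 T)%:R in F2b.
have F0d : F0 <= Fa * delta / 2.
  have : u = N%:R * delta / 2 by [].
  nra.
have Kd : K * delta ^+ 2 = 6.
  rewrite /K; field; by rewrite gt_eqF.
have F2d : F2 <= Fa * delta / 2.
  have h1 : F2 * K * w <= P * w by rewrite ler_wpM2r // ltW // (lt_le_trans ltr01 w1).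
  have h2 : P * w <= Fa * (N%:R + 1) by rewrite -natr1 in P2b.
  have h := le_trans h1 h2.
  have h4 : F2 * K * w * delta ^+ 2 <= Fa * (N%:R + 1) * delta ^+ 2.
    by apply: ler_wpM2r h; apply: exprn_ge0; apply: ltW.
  have e : F2 * K * w * delta ^+ 2 = F2 * 6 * w by rewrite -Kd; ring.
  rewrite e in h4.
  have h5 : Fa * delta * ((N%:R + 1) * delta) <= Fa * delta * (3 * w).
    by apply: ler_wpM2l hw; apply: mulr_ge0; apply: ltW.
  have h6 : F2 * 6 * w <= Fa * delta * (3 * w).
    apply: le_trans h4 _; apply: le_trans h5; rewrite le_eqVlt; apply/orP; left; apply/eqP; ring.
  nra.
rewrite ler_pdivlMr //.
have HT' : (count good T)%:R + (count (predC good) T)%:R = Fa :> R by rewrite -natrD HT.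
have HC' : (count (predC good) T)%:R <= F0 + F2 :> R by rewrite -natrD ler_nat.
have HS' : (count good T)%:R <= (count succ T)%:R :> R by rewrite ler_nat.
lra.
Qed.
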